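(* Let $A,B\in\mathcal{M}_n$, let $\psi\colon H^*(M(A);\mathbb{Z})\to H^*(M(B);\mathbb{Z})$ be a graded ring isomorphism, and denote also by $\psi$ its rationalization $H^*(M(A);\mathbb{Q})\to H^*(M(B);\mathbb{Q})$. Let $\sigma$ be a permutation of $\{1,\dots,n\}$ and $q_1,\dots,q_n$ nonzero rationals with $\psi(y^A_j)=q_jy^B_{\sigma(j)}$ for all $j$ (such data exist). Then $q_j\in\{\pm\tfrac12,\pm1,\pm2\}$ for every $j$, and (1) $q_j\in\{\pm\tfrac12\}$ if and only if $\alpha^A_j\not\equiv0\pmod2$ and $\alpha^B_{\sigma(j)}\equiv0\pmod 2$; (2) $q_j\in\{\pm2\}$ if and only if $\alpha^A_j\equiv0\pmod2$ and $\alpha^B_{\sigma(j)}\not\equiv0\pmod2$. Moreover, if $q_j=\pm1$ for all $j$, then $\psi(p(M(A)))=p(M(B))$, where $p$ denotes the total Pontrjagin class.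
   Context: Let $\mathcal{M}_n$ be the set of integral strictly upper triangular $n\times n$ matrices $A=(A^i_j)$ ($A^i_j$ is the $(i,j)$ entry, and $A^i_j=0$ for $i\ge j$). For $A\in\mathcal{M}_n$, $M(A)$ denotes the Bott manifold obtained as the quotient of $(S^3)^n$ ($S^3\subset\mathbb{C}^2$ the unit sphere) by the free $(S^1)^n$-action $(g_1,\dots,g_n)\cdot((z_1,w_1),\dots,(z_n,w_n))=\big(((\prod_{k<j}g_k^{-A^k_j})g_jz_j,\ g_jw_j)\big)_{j=1}^n$. Let $x^A_j\in H^2(M(A);\mathbb{Z})$ be the first Chern class of the line bundle obtained as the quotient of $(S^3)^n\times\mathbb{C}$ where $g$ acts on the $\mathbb{C}$-factor by $g_j^{-1}$. Put $\alpha^A_j=\sum_{i<j}A^i_jx^A_i\in H^2(M(A);\mathbb{Z})$; congruences mod $2$ are taken in $H^2(M(A);\mathbb{Z})$ with basis $x^A_1,\dots,x^A_n$. Then $H^*(M(A);\mathbb{Z})=\mathbb{Z}[x^A_1,\dots,x^A_n]/((x^A_j)^2-\alpha^A_jx^A_j\mid j=1,\dots,n)$. Define $y^A_j=x^A_j-\tfrac12\alpha^A_j\in H^2(M(A);\mathbb{Q})$. The same notation is used for $B$. *)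

(* Defs.v *)
From HB Require Import structures.
From mathcomp Require Import all_boot all_order all_algebra.
From mathcomp Require Import perm.
From mathcomp Require Import mpoly.
From Stdlib Require Import ClassicalEpsilon.

Set Implicit Arguments.
Unset Strict Implicit.
Unset Printing Implicit Defensive.

Import Order.TTheory GRing.Theory Num.Theory.
Local Open Scope ring_scope.
Local Open Scope quotient_scope.

Definition strict_upper (n : nat) (A : 'M[int]_n) : Prop :=
  forall i j : 'I_n, (j <= i)%N -> A i j = 0.

Section Bott.
Variables (R : comNzRingType) (n : nat).

Definition alpha (A : 'M[int]_n) (j : 'I_n) : {mpoly R[n]} :=
  \sum_(i < n | (i < j)%N) (A i j)%:~R *: 'X_i.

Definition bott_rel (A : 'M[int]_n) (j : 'I_n) : {mpoly R[n]} :=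
  'X_j ^+ 2 - alpha A j * 'X_j.

Definition in_bott_ideal (A : 'M[int]_n) (p : {mpoly R[n]}) : Prop :=
  exists c : 'I_n -> {mpoly R[n]}, p = \sum_(j < n) c j * bott_rel A j.

Definition bott_ideal (A : 'M[int]_n) : pred {mpoly R[n]} :=
  fun p => if excluded_middle_informative (in_bott_ideal A p) then true else false.

Lemma bott_idealP A p : reflect (in_bott_ideal A p) (bott_ideal A p).
Proof.
rewrite /bott_ideal; case: excluded_middle_informative => h.
  by apply: ReflectT.
by apply: ReflectF.
Qed.

Lemma bott_ideal_closed A : idealr_closed (bott_ideal A).
Proof.
split.
- apply/bott_idealP; exists (fun _ => 0).
  by rewrite big1 // => j _; rewrite mul0r.
- apply/negP => /bott_idealP [c hc].
  have := congr1 (meval (fun _ : 'I_n => (0 : R))) hc.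
  rewrite meval1 (big_morph _ (mevalD _) (meval0 _)) big1.
    by move/eqP; rewrite oner_eq0.
  move=> j _; rewrite mevalM /bott_rel mevalB expr2 !mevalM mevalXU.
  by rewrite !mulr0 subrr mulr0.
- move=> a u v /bott_idealP [cu hu] /bott_idealP [cv hv].
  apply/bott_idealP; exists (fun j => a * cu j + cv j).
  rewrite hu hv mulr_sumr -big_split /=; apply: eq_bigr => j _.
  by rewrite mulrDl mulrA.
Qed.

HB.instance Definition _ (A : 'M[int]_n) :=
  isIdealr.Build {mpoly R[n]} (bott_ideal A) (bott_ideal_closed A).

(* H^*(M(A); R) = R[x_1..x_n] / (x_j^2 - alpha_j x_j) *)
Definition Hcoh (A : 'M[int]_n) := {ideal_quot (bott_ideal A : {pred {mpoly R[n]}})}.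

Definition cls (A : 'M[int]_n) (p : {mpoly R[n]}) : Hcoh A :=
  \pi_(Hcoh A) p.

(* h lies in H^{2k}: it has a representative homogeneous of degree k
   (the generators x_j have cohomological degree 2, odd cohomology is 0) *)
Definition in_Hdeg (A : 'M[int]_n) (k : nat) (h : Hcoh A) : Prop :=
  exists p : {mpoly R[n]}, p \is k.-homog /\ cls A p = h.

End Bott.

Arguments cls {R n} A p.
Arguments alpha {R n} A j.

Definition graded_ring_iso (R : comNzRingType) (n : nat) (A B : 'M[int]_n)
    (psi : {rmorphism Hcoh R A -> Hcoh R B}) : Prop :=
  bijective psi /\
  forall (k : nat) (h : Hcoh R A), in_Hdeg k h -> in_Hdeg k (psi h).

Definition rationalize (n : nat) (A : 'M[int]_n) (h : Hcoh int A) : Hcoh rat A :=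
  cls A (map_mpoly (fun z : int => z%:~R : rat) (repr h)).

Definition ypoly (n : nat) (A : 'M[int]_n) (j : 'I_n) : {mpoly rat[n]} :=
  'X_j - (2%:R)^-1 *: alpha A j.

Definition alpha_even (n : nat) (A : 'M[int]_n) (j : 'I_n) : Prop :=
  forall i : 'I_n, (i < j)%N -> (2 %| A i j)%Z.

Definition pontrjagin (n : nat) (A : 'M[int]_n) : Hcoh int A :=
  cls A (\prod_(j < n) (1 + alpha A j ^+ 2)).

(* Main.v *)
Require Import Defs.
From HB Require Import structures.
From mathcomp Require Import all_boot all_order all_algebra.
From mathcomp Require Import perm mpoly.
From mathcomp Require Import ring_quotient.
From mathcomp Require Import ring lra zify.
From Stdlib Require Import Classical.
Import GRing.Theory.
Local Open Scope ring_scope.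
Local Open Scope quotient_scope.

Import Num.Theory.
Lemma t1 (m : int) : (m %| 2)%Z -> m != 0 -> [\/ m = 1, m = -1, m = 2 | m = -2].
Proof. move=> h h0. have h1 := dvdn_leq (isT : (0 < 2)%N) h. have h2 : (`|m| != 0)%N by rewrite absz_eq0.
have : `|m|%N = 1%N \/ `|m|%N = 2%N.
  move: h h1 h2; case: `|m|%N => [|[|[|]]] //; auto.
move=> H; have : [|| m == 1, m == -1, m == 2 | m == -2] by lia.
by case/or4P => /eqP ->; [apply: Or41|apply: Or42|apply: Or43|apply: Or44].
Qed.
Lemma t2 (m x : int) : (2 %| m * x)%Z -> ~~ (2 %| x)%Z -> (2 %| m)%Z.
Proof. rewrite !dvdzE abszM !dvdn2 oddM. by case: (odd _); case: (odd _). Qed.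

Lemma intr_eq (x y : int) : (x%:~R : rat) = y%:~R -> x = y.
Proof. by move/eqP; rewrite eqr_int => /eqP. Qed.

Lemma numeric n (wA wB u : 'I_n -> int) (q : rat) (j k : 'I_n) :
  q != 0 -> wA j = 2 -> wB k = 2 ->
  (forall i, (u i)%:~R = q * (wB i)%:~R :> rat) ->
  (forall d, (forall i, (d %| wA i)%Z) <-> (forall i, (d %| u i)%Z)) ->
  [\/ [/\ (forall i, (2 %| wB i)%Z), ~ (forall i, (2 %| wA i)%Z) & (q = 2^-1 \/ q = - 2^-1)],
      [/\ (forall i, (2 %| wB i)%Z), (forall i, (2 %| wA i)%Z) & (q = 1 \/ q = -1)],
      [/\ ~ (forall i, (2 %| wB i)%Z), ~(forall i, (2 %| wA i)%Z) & (q = 1 \/ q = -1)] |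
      [/\ ~ (forall i, (2 %| wB i)%Z), (forall i, (2 %| wA i)%Z) & (q = 2 \/ q = -2)]].
Proof.
move=> q0 hAj hBk hu hD.
have hm : ((u k)%:~R : rat) = q * 2 by rewrite hu hBk.
case: (classic (forall i, (2 %| wB i)%Z)) => hb.
- have hum : forall i, u i = u k * (wB i %/ 2)%Z.
    move=> i; apply: intr_eq; rewrite hu -{1}(divzK (hb i)) !rmorphM /= hm.
    rewrite (_ : (2%:~R : rat) = 2) //; ring.
  have : (u k %| wA j)%Z.
    by apply: (proj2 (hD (u k))) => i; rewrite hum dvdz_mulr.
  rewrite hAj => hmd.
  have m0 : u k != 0.
    by apply/eqP => h; move: hm; rewrite h /= => /esym/eqP; rewrite mulf_eq0 (negbTE q0).
  have [h|h|h|h] := t1 _ hmd m0; rewrite h /= in hm.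
  + apply: Or41; split => //; last by left; lra.
    by move=> /(hD 2) /(_ k); rewrite h.
  + apply: Or41; split => //; last by right; lra.
    by move=> /(hD 2) /(_ k); rewrite h.
  + apply: Or42; split => //; last by left; lra.
    by apply/(hD 2) => i; rewrite hum h dvdz_mulr.
  + apply: Or42; split => //; last by right; lra.
    by apply/(hD 2) => i; rewrite hum h dvdz_mulr.
- have [i0 hi0] := not_all_ex_not _ _ hb.
  have h2 : 2 * u i0 = u k * wB i0.
    apply: intr_eq; rewrite !rmorphM /= hu hm.
    rewrite (_ : (2%:~R : rat) = 2) //; ring.
  have hm2 : (2 %| u k)%Z.
    by apply: (t2 _ (wB i0)); [rewrite -h2 dvdz_mulr | apply/negP].
  set m' := (u k %/ 2)%Z.
  have hmk : u k = m' * 2 by rewrite divzK.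
  have hq : (m'%:~R : rat) = q.
    by move: hm; rewrite hmk rmorphM /= => /(congr1 (fun x => x / 2)); rewrite !mulfK.
  have hum : forall i, u i = m' * wB i.
    by move=> i; apply: intr_eq; rewrite hu rmorphM /= hq.
  have : (m' %| wA j)%Z.
    by apply: (proj2 (hD m')) => i; rewrite hum dvdz_mulr.
  rewrite hAj => hmd.
  have m0 : m' != 0 by apply/eqP => h; move: hq; rewrite h /= => /esym/eqP; rewrite (negbTE q0).
  have [h|h|h|h] := t1 _ hmd m0; rewrite h /= in hq.
  + apply: Or43; split => //; last by left.
    by move=> /(hD 2) /(_ i0); rewrite hum h mul1r.
  + apply: Or43; split => //; last by right.
    by move=> /(hD 2) /(_ i0); rewrite hum h mulN1r dvdzE abszN -dvdzE.
  + apply: Or44; split => //; last by left.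
    by apply/(hD 2) => i; rewrite hum h dvdz_mulr.
  + apply: Or44; split => //; last by right.
    by apply/(hD 2) => i; rewrite hum h dvdz_mulr.
Qed.

Definition lin (R : comNzRingType) n (c : 'I_n -> R) : {mpoly R[n]} :=
  \sum_(i < n) c i *: 'X_i.

Arguments lin {R n} c.

Section Gen.
Variables (R : comNzRingType) (n : nat) (A : 'M[int]_n).
Implicit Types (p q : {mpoly R[n]}) (c : 'I_n -> R).

Lemma X_homog (i : 'I_n) : ('X_i : {mpoly R[n]}) \is 1.-homog.
Proof. by apply/dhomogP => m /mem_msuppXP <-; exact: mdeg1. Qed.

Lemma lin_homog c : lin c \is 1.-homog.
Proof. by apply: rpred_sum => i _; apply: dhomogZ; apply: X_homog. Qed.

Lemma lin_coef c i : (lin c)@_U_(i) = c i.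
Proof.
rewrite /lin raddf_sum /= (bigD1 i) //= mcoeffZ mcoeffXU eqxx mulr1 big1 ?addr0 //.
by move=> k /negbTE hk; rewrite mcoeffZ mcoeffXU hk mulr0.
Qed.

Lemma homog1_lin p : p \is 1.-homog -> p = lin (fun i => p@_U_(i)).
Proof.
move=> hp; apply/mpolyP => m.
have [/mdeg1P [i /eqP ->]|hm] := boolP (mdeg m == 1%N); first by rewrite lin_coef.
by rewrite (dhomog_nemf_coeff hp hm) (dhomog_nemf_coeff (lin_homog _) hm).
Qed.

Lemma linB c c' : lin (fun i => c i - c' i) = lin c - lin c'.
Proof. by rewrite /lin -sumrB; apply: eq_bigr => i _; rewrite scalerBl. Qed.

Lemma linZ (a : R) c : lin (fun i => a * c i) = a *: lin c.
Proof. by rewrite /lin scaler_sumr; apply: eq_bigr => i _; rewrite scalerA. Qed.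

Lemma alpha_homog (j : 'I_n) : (alpha A j : {mpoly R[n]}) \is 1.-homog.
Proof. by apply: rpred_sum => i _; apply: dhomogZ; apply: X_homog. Qed.

Lemma rel_homog (j : 'I_n) : (bott_rel R A j) \is 2.-homog.
Proof.
apply: rpredB; first exact: (dhomogMn 2 (X_homog j)).
exact: (dhomogM (alpha_homog j) (X_homog j)).
Qed.

Lemma pihomog_mul_homog d (c r : {mpoly R[n]}) : r \is 2.-homog -> (d < 2)%N ->
  pihomog mdeg d (c * r) = 0 :> {mpoly R[n]}.
Proof.
move=> hr hd; rewrite (pihomog_partitionE (k := msize c) (leqnn _)) mulr_suml.
rewrite raddf_sum /= big1 // => e _; apply: (@pihomog_ne0 _ _ _ (e + 2)%N).
  by rewrite eq_sym neq_ltn (leq_trans hd) ?leq_addl.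
exact: (dhomogM (pihomogP _ _ _) hr).
Qed.

Lemma ideal_pihomog d p : in_bott_ideal A p -> (d < 2)%N -> pihomog mdeg d p = 0.
Proof.
move=> [c ->] hd; rewrite raddf_sum /= big1 // => j _.
exact: pihomog_mul_homog (rel_homog j) hd.
Qed.

Lemma cls_eqP p q : cls A p = cls A q <-> in_bott_ideal A (p - q).
Proof.
have := @Quotient.idealrBE _ (bott_ideal A : {pred {mpoly R[n]}}) p q.
rewrite /cls /Hcoh => H; split.
  by move=> h; apply/bott_idealP; have := H; rewrite h eqxx.
by move=> /bott_idealP h; apply/eqP; rewrite -H.
Qed.

Lemma lin_inj c c' : cls A (lin c) = cls A (lin c') -> forall i, c i = c' i.
Proof.
move=> /cls_eqP /(@ideal_pihomog 1 _) /(_ isT).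
rewrite -linB pihomog_dE ?lin_homog // => h i.
by apply/eqP; rewrite -subr_eq0; have := congr1 (mcoeff U_(i)) h; rewrite lin_coef mcoeff0 => ->.
Qed.

Lemma clsD p q : cls A (p + q) = cls A p + cls A q.
Proof. by rewrite /cls rmorphD. Qed.
Lemma clsM p q : cls A (p * q) = cls A p * cls A q.
Proof. by rewrite /cls rmorphM. Qed.

Lemma cls_sum k (F : 'I_k -> {mpoly R[n]}) : cls A (\sum_(i < k) F i) = \sum_(i < k) cls A (F i).
Proof. by rewrite /cls rmorph_sum. Qed.

Lemma cls1 : cls A (1 : {mpoly R[n]}) = 1.
Proof. by rewrite /cls rmorph1. Qed.
Lemma cls_prod k (F : 'I_k -> {mpoly R[n]}) : cls A (\prod_(i < k) F i) = \prod_(i < k) cls A (F i).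
Proof. by rewrite /cls rmorph_prod. Qed.

Lemma clsN p : cls A (- p) = - cls A p.
Proof. by rewrite /cls rmorphN. Qed.
Lemma linN c : lin (fun i => - c i) = - lin c.
Proof. by rewrite /lin -sumrN; apply: eq_bigr => i _; rewrite scaleNr. Qed.

Definition L1 (h : Hcoh R A) : {mpoly R[n]} := pihomog mdeg 1 (repr h).

Lemma cls_repr (h : Hcoh R A) : cls A (repr h) = h.
Proof. by rewrite /cls reprK. Qed.

Lemma L1_cls p : L1 (cls A p) = pihomog mdeg 1 p.
Proof.
have /cls_eqP /(@ideal_pihomog 1 _) /(_ isT) := cls_repr (cls A p).
by rewrite pihomogB => /eqP; rewrite subr_eq0 => /eqP.
Qed.

Lemma L1D (x y : Hcoh R A) : L1 (x + y) = L1 x + L1 y.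
Proof.
by rewrite -[x]cls_repr -[y]cls_repr -clsD !L1_cls pihomogD.
Qed.

Lemma L10 : L1 0 = 0.
Proof. by rewrite -(rmorph0 (\pi_(Hcoh R A))) -/(cls A 0) L1_cls pihomog0. Qed.

Lemma L1_hdeg d h : in_Hdeg d h -> d != 1%N -> L1 h = 0.
Proof.
move=> [r [hr <-]] hd; rewrite L1_cls; apply: (pihomog_ne0 hd hr).
Qed.

Lemma L1_hdeg1 h : in_Hdeg 1 h -> h = cls A (L1 h) /\ L1 h \is 1.-homog.
Proof.
move=> [r [hr <-]]; rewrite L1_cls pihomog_dE //.
Qed.

Lemma lin_ext (c c' : 'I_n -> R) : (forall i, c i = c' i) -> lin c = lin c'.
Proof. by move=> h; apply: eq_bigr => i _; rewrite h. Qed.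

Lemma linMz (t : 'I_n -> R) (d : int) : lin (fun i => t i * d%:~R) = lin t *~ d.
Proof.
by rewrite -scaler_int -linZ; apply: lin_ext => i; rewrite mulrC.
Qed.

Lemma clsMz p (d : int) : cls A (p *~ d) = cls A p *~ d.
Proof. by rewrite /cls raddfMz. Qed.

End Gen.
Arguments X_homog {R n}.
Arguments lin_homog {R n}.
Arguments lin_coef {R n}.
Arguments homog1_lin {R n}.
Arguments linB {R n}.
Arguments linZ {R n}.
Arguments alpha_homog {R n A}.
Arguments rel_homog {R n A}.
Arguments pihomog_mul_homog {R n}.
Arguments ideal_pihomog {R n A}.
Arguments cls_eqP {R n A}.
Arguments lin_inj {R n A}.
Arguments clsD {R n A}.
Arguments clsM {R n A}.
Arguments cls_sum {R n A}.
Arguments clsN {R n A}.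
Arguments linN {R n}.
Arguments cls1 {R n A}.
Arguments cls_prod {R n A}.
Arguments L1 {R n A}.
Arguments cls_repr {R n A}.
Arguments L1_cls {R n A}.
Arguments L1D {R n A}.
Arguments L10 {R n A}.
Arguments L1_hdeg {R n A}.
Arguments L1_hdeg1 {R n A}.
Arguments lin_ext {R n}.
Arguments linMz {R n}.
Arguments clsMz {R n A}.

Section Main.
Variables (n : nat) (A B : 'M[int]_n).
Variables (psi : {rmorphism Hcoh int A -> Hcoh int B}) (hpsi : graded_ring_iso psi).

Lemma psi_lin (c : 'I_n -> int) : exists c', psi (cls A (lin c)) = cls B (lin c').
Proof.
have h1 : in_Hdeg 1 (cls A (lin c)) by exists (lin c); split => //; exact: lin_homog.
have [e hh] := L1_hdeg1 _ (hpsi.2 _ _ h1).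
by exists (fun i => (L1 (psi (cls A (lin c))))@_U_(i)); rewrite {1}e -homog1_lin.
Qed.

Lemma psi_L1 (p : {mpoly int[n]}) :
  L1 (psi (cls A p)) = L1 (psi (cls A (pihomog mdeg 1 p))).
Proof.
have hK : (msize p <= maxn (msize p) 2)%N by apply: leq_maxl.
have h1K : (1 < maxn (msize p) 2)%N by rewrite leq_max leqnn orbT.
rewrite {1}(pihomog_partitionE hK) cls_sum rmorph_sum.
rewrite (big_morph (@L1 _ _ B) (@L1D _ _ B) (@L10 _ _ B)).
rewrite (bigD1 (Ordinal h1K)) // big1; first exact: addr0.
move=> d hd.
have hd' : in_Hdeg d (psi (cls A (pihomog mdeg d p))).
  by apply: hpsi.2; exists (pihomog mdeg d p); split => //; apply: pihomogP.
by apply: (L1_hdeg _ _ hd'); apply: contra hd => /eqP h; apply/eqP/val_inj.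
Qed.

Lemma psi_surj (c' : 'I_n -> int) : exists c, psi (cls A (lin c)) = cls B (lin c').
Proof.
have [p hg] : exists p, psi (cls A p) = cls B (lin c').
  have [f fK Kf] := hpsi.1.
  exists (repr (f (cls B (lin c')))); rewrite cls_repr; exact: Kf.
exists (fun i => (pihomog mdeg 1 p)@_U_(i)).
rewrite -(homog1_lin _ (pihomogP _ _ _)).
have hd : in_Hdeg 1 (psi (cls A (pihomog mdeg 1 p))).
  by apply: hpsi.2; exists (pihomog mdeg 1 p); split => //; apply: pihomogP.
have [-> _] := L1_hdeg1 _ hd.
by rewrite -psi_L1 hg L1_cls (pihomog_dE (lin_homog _)).
Qed.

Lemma psi_inj : injective psi.
Proof. exact: (bij_inj hpsi.1). Qed.

Lemma Dtrans (c c' : 'I_n -> int) (d : int) : psi (cls A (lin c)) = cls B (lin c') ->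
  (forall i, (d %| c i)%Z) <-> (forall i, (d %| c' i)%Z).
Proof.
move=> hc; split => hd.
- have [t' ht'] := psi_lin (fun i => (c i %/ d)%Z).
  have e : lin c = lin (fun i => (c i %/ d)%Z * d%:~R).
    by apply: lin_ext => i; rewrite intz divzK.
  have e2 : psi (cls A (lin c)) = cls B (lin t') *~ d.
    by rewrite e linMz clsMz raddfMz; congr (_ *~ _); exact: ht'.
  move: hc; rewrite e2 -clsMz -linMz => /lin_inj h i.
  by rewrite -h intz dvdz_mull.
- have [t ht] := psi_surj (fun i => (c' i %/ d)%Z).
  have e : lin c' = lin (fun i => (c' i %/ d)%Z * d%:~R).
    by apply: lin_ext => i; rewrite intz divzK.
  have e2 : cls B (lin c') = psi (cls A (lin t)) *~ d.
    by rewrite e linMz clsMz; congr (_ *~ _); symmetry; exact: ht.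
  move: hc; rewrite e2 -raddfMz -clsMz -linMz => /psi_inj /lin_inj h i.
  by rewrite h intz dvdz_mull.
Qed.

Notation zq := (fun z : int => z%:~R : rat).

Lemma map_alpha (C : 'M[int]_n) j :
  map_mpoly zq (alpha C j : {mpoly int[n]}) = alpha C j.
Proof.
rewrite /alpha raddf_sum; apply: eq_bigr => i _.
rewrite /= map_mpolyZ map_mpolyX; congr (_ *: _); exact: (congr1 (fun z : int => z%:~R : rat) (intz (C i j))).
Qed.

Lemma map_rel (C : 'M[int]_n) j :
  map_mpoly zq (bott_rel int C j) = bott_rel rat C j.
Proof.
by rewrite /bott_rel rmorphB rmorphXn rmorphM /= map_alpha map_mpolyX.
Qed.

Lemma map_ideal (C : 'M[int]_n) p : in_bott_ideal C p -> in_bott_ideal C (map_mpoly zq p).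
Proof.
move=> [c ->]; exists (fun j => map_mpoly zq (c j)).
by rewrite rmorph_sum; apply: eq_bigr => j _; rewrite rmorphM /= map_rel.
Qed.

Lemma rat_cls (C : 'M[int]_n) p : rationalize (cls C p) = cls C (map_mpoly zq p).
Proof.
rewrite /rationalize; apply/cls_eqP; rewrite -rmorphB; apply: map_ideal.
by apply/cls_eqP; rewrite cls_repr.
Qed.

Lemma map_lin (c : 'I_n -> int) : map_mpoly zq (lin c) = lin (fun i => (c i)%:~R).
Proof.
by rewrite /lin raddf_sum; apply: eq_bigr => i _; rewrite /= map_mpolyZ map_mpolyX.
Qed.

Definition wv (C : 'M[int]_n) (j i : 'I_n) : int := (j == i)%:R *+ 2 - C i j.

Lemma alpha_lin (R : comNzRingType) (C : 'M[int]_n) (hC : strict_upper C) j :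
  alpha C j = lin (fun i => ((C i j)%:~R : R)).
Proof.
rewrite /alpha /lin big_mkcond; apply: eq_bigr => i _.
case: ifP => // /negbT; rewrite -leqNgt => h.
by rewrite hC // scale0r.
Qed.

Lemma lin_wv (R : comNzRingType) (C : 'M[int]_n) (hC : strict_upper C) j :
  lin (fun i => ((wv C j i)%:~R : R)) = 'X_j *+ 2 - alpha C j.
Proof.
have hh : ('X_j *+ 2 - alpha C j : {mpoly R[n]}) \is 1.-homog.
  by apply: rpredB; [apply: rpredMn; apply: X_homog | apply: alpha_homog].
rewrite [RHS](homog1_lin _ hh); apply: lin_ext => i.
rewrite mcoeffB mcoeffMn (alpha_lin R C hC) lin_coef mcoeffXU /wv.
by rewrite rmorphB rmorphMn rmorph_nat.
Qed.

Lemma ypoly2 (C : 'M[int]_n) (hC : strict_upper C) j :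
  ypoly C j *+ 2 = lin (fun i => ((wv C j i)%:~R : rat)).
Proof.
rewrite lin_wv // /ypoly mulrnBl scalerMnl.
by rewrite (_ : (2%:R^-1 *+ 2 : rat) = 1) ?scale1r.
Qed.

Lemma clsMn (C : 'M[int]_n) (R : comNzRingType) (p : {mpoly R[n]}) k : cls C (p *+ k) = cls C p *+ k.
Proof. by rewrite /cls raddfMn. Qed.

Lemma dvd2_wv (C : 'M[int]_n) j i : (2 %| wv C j i)%Z = (2 %| C i j)%Z.
Proof.
have hc : (2 %| (j == i)%:R *+ 2)%Z by rewrite -mulr_natr dvdz_mull.
by rewrite /wv rpredBl // rpredN.
Qed.

Lemma even_wv (C : 'M[int]_n) (hC : strict_upper C) j :
  alpha_even C j <-> (forall i, (2 %| wv C j i)%Z).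
Proof.
split => h i; rewrite ?dvd2_wv.
  by case: (ltnP i j) => hij; [exact: h | rewrite hC // dvdz0].
by move=> _; rewrite -dvd2_wv.
Qed.

Lemma wv_diag (C : 'M[int]_n) (hC : strict_upper C) j : wv C j j = 2.
Proof. by rewrite /wv eqxx hC // subr0. Qed.

Lemma lin_wv_int (C : 'M[int]_n) (hC : strict_upper C) j :
  lin (wv C j) = 'X_j *+ 2 - alpha C j.
Proof. by rewrite -lin_wv //; apply: lin_ext => i; rewrite intz. Qed.

Lemma cls_alpha2 (C : 'M[int]_n) (hC : strict_upper C) j :
  cls C ((alpha C j : {mpoly int[n]}) ^+ 2) = cls C (lin (wv C j)) ^+ 2.
Proof.
rewrite -rmorphXn; apply/cls_eqP.
exists (fun k => if k == j then -4 else 0).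
rewrite (bigD1 j) //= eqxx big1 ?addr0; last first.
  by move=> k /negbTE ->; rewrite mul0r.
rewrite lin_wv_int // /bott_rel.
ring.
Qed.

Lemma pont_eq (C : 'M[int]_n) (hC : strict_upper C) :
  pontrjagin C = \prod_(j < n) (1 + cls C (lin (wv C j)) ^+ 2).
Proof.
rewrite /pontrjagin cls_prod; apply: eq_bigr => j _.
by rewrite clsD cls1 cls_alpha2.
Qed.

Section Final.
Variables (hA : strict_upper A) (hB : strict_upper B).
Variables (psiQ : {rmorphism Hcoh rat A -> Hcoh rat B})
  (hpsiQ : forall h : Hcoh int A, psiQ (rationalize h) = rationalize (psi h))
  (sigma : 'S_n) (q : 'I_n -> rat)
  (hy : forall j, psiQ (cls A (ypoly A j)) = cls B (q j *: ypoly B (sigma j))).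

Lemma keyj j : exists u : 'I_n -> int, psi (cls A (lin (wv A j))) = cls B (lin u) /\
   forall i, (u i)%:~R = q j * (wv B (sigma j) i)%:~R :> rat.
Proof.
have [u hu] := psi_lin (wv A j); exists u; split => //.
have e := hpsiQ (cls A (lin (wv A j))).
rewrite hu !rat_cls !map_lin -ypoly2 // clsMn rmorphMn hy -clsMn scalerMnr in e.
rewrite ypoly2 // -linZ in e.
by move=> i; rewrite (lin_inj _ _ e).
Qed.

End Final.

End Main.

Arguments wv {n} C j i.
Arguments numeric {n wA wB u q j k}.
Arguments wv_diag {n C} hC j.
Arguments even_wv {n C} hC j.
Arguments pont_eq {n C} hC.
Arguments Dtrans {n A B psi} hpsi {c c' d}.

Theorem lemma4p2 (n : nat) (A B : 'M[int]_n)
  (hA : strict_upper A) (hB : strict_upper B)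
  (psi : {rmorphism Hcoh int A -> Hcoh int B})
  (hpsi : graded_ring_iso psi)
  (psiQ : {rmorphism Hcoh rat A -> Hcoh rat B})
  (hpsiQ : forall h : Hcoh int A, psiQ (rationalize h) = rationalize (psi h))
  (sigma : 'S_n) (q : 'I_n -> rat)
  (hq0 : forall j, q j != 0)
  (hy : forall j, psiQ (cls A (ypoly A j)) = cls B (q j *: ypoly B (sigma j))) :
  (forall j, q j \in [:: 2^-1; - 2^-1; 1; -1; 2; -2]) /\
  (forall j, (q j = 2^-1 \/ q j = - 2^-1) <->
             (~ alpha_even A j /\ alpha_even B (sigma j))) /\
  (forall j, (q j = 2 \/ q j = -2) <->
             (alpha_even A j /\ ~ alpha_even B (sigma j))) /\
  ((forall j, q j = 1 \/ q j = -1) -> psi (pontrjagin A) = pontrjagin B).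
Proof.
have key j := @keyj n A B psi hpsi hA hB psiQ hpsiQ sigma q hy j.
have scen : forall j,
  [\/ [/\ (forall i, (2 %| wv B (sigma j) i)%Z), ~ (forall i, (2 %| wv A j i)%Z) & (q j = 2^-1 \/ q j = - 2^-1)],
      [/\ (forall i, (2 %| wv B (sigma j) i)%Z), (forall i, (2 %| wv A j i)%Z) & (q j = 1 \/ q j = -1)],
      [/\ ~ (forall i, (2 %| wv B (sigma j) i)%Z), ~(forall i, (2 %| wv A j i)%Z) & (q j = 1 \/ q j = -1)] |
      [/\ ~ (forall i, (2 %| wv B (sigma j) i)%Z), (forall i, (2 %| wv A j i)%Z) & (q j = 2 \/ q j = -2)]].
  move=> j; have [u [hu hF]] := key j.
  apply: (numeric (hq0 j) (wv_diag hA j) (wv_diag hB (sigma j)) hF) => d.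
  exact: (Dtrans hpsi hu).
split; [|split; [|split]].
- move=> j; case: (scen j) => -[_ _ [] ->]; by rewrite !inE eqxx ?orbT.
- move=> j; have := even_wv hA j; have := even_wv hB (sigma j).
  case: (scen j) => -[hb ha hq] eB eA;
  move: hb ha hq eB eA;
  generalize (forall i, (2 %| wv B (sigma j) i)%Z) (forall i, (2 %| wv A j i)%Z);
  move=> PB PA hb ha hq eB eA; (split => hx;
    [tauto || (exfalso; case: hq => hq; case: hx => hx; rewrite hq in hx; lra) | tauto]).
- move=> j; have := even_wv hA j; have := even_wv hB (sigma j).
  case: (scen j) => -[hb ha hq] eB eA;
  move: hb ha hq eB eA;
  generalize (forall i, (2 %| wv B (sigma j) i)%Z) (forall i, (2 %| wv A j i)%Z);
  move=> PB PA hb ha hq eB eA; (split => hx;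
    [tauto || (exfalso; case: hq => hq; case: hx => hx; rewrite hq in hx; lra) | tauto]).
- move=> hq1.
  rewrite (pont_eq hA) (pont_eq hB) rmorph_prod.
  rewrite [RHS](reindex_inj (@perm_inj _ sigma)).
  apply: eq_bigr => j _; rewrite rmorphD rmorph1 rmorphXn.
  have [u [hu hF]] := key j; rewrite hu.
  case: (hq1 j) => hqj.
    have e : forall i, u i = wv B (sigma j) i.
      by move=> i; apply: intr_eq; rewrite hF hqj mul1r.
    by rewrite (lin_ext _ _ e).
  have e : forall i, u i = - wv B (sigma j) i.
    by move=> i; apply: intr_eq; rewrite hF hqj mulN1r rmorphN.
  by rewrite (lin_ext _ _ e) linN clsN sqrrN.
Qed.
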